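(* Let $\nabla$ be an affine connection, $h$ a non-degenerate symmetric $(0,2)$-tensor field and $J$ an $h$-symmetric $(1,1)$-tensor field on a smooth manifold $M$. Then the generalized almost product structure $\hat J$ on $TM\oplus T^*M$, $\hat J(X+\eta)=-X+2J(h^{-1}(\eta))+\eta$, is $\nabla$-integrable if and only if $(\nabla_{JX}h)(JY)-(\nabla_{JY}h)(JX)+h(T^\nabla(JX,JY))=(\nabla_{JX}J^* )(h(Y))-(\nabla_{JY}J^* )(h(X))$ for all vector fields $X,Y$ on $M$.
   Context: $h$ is viewed as the isomorphism $TM\to T^*M$, $X\mapsto h(X,\cdot)$, with inverse $h^{-1}$; $(J^*\eta)(X)=\eta(JX)$; $J$ is $h$-symmetric if $h(JX,Y)=h(X,JY)$. $(\nabla_Xh)(Y)$ denotes the 1-form $Z\mapsto(\nabla_Xh)(Y,Z)=X(h(Y,Z))-h(\nabla_XY,Z)-h(Y,\nabla_XZ)$; $(\nabla_XJ^* )\beta:=\nabla_X(J^*\beta)-J^*(\nabla_X\beta)$; $T^\nabla(X,Y)=\nabla_XY-\nabla_YX-[X,Y]$. The $\nabla$-bracket: $[X+\eta,Y+\beta]_\nabla:=[X,Y]+\nabla_X\beta-\nabla_Y\eta$; $N^\nabla_{\hat J}(\sigma,\tau):=[\hat J\sigma,\hat J\tau]_\nabla-\hat J[\hat J\sigma,\tau]_\nabla-\hat J[\sigma,\hat J\tau]_\nabla+\hat J^2[\sigma,\tau]_\nabla$; $\nabla$-integrable means $N^\nabla_{\hat J}=0$. *)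

(* Defs.v *)
(* Smooth manifolds are not available, so the setting of the
   paper is rendered algebraically (Lie–Rinehart style):
     R  = the real numbers (realType),
     A  = the commutative R-algebra of smooth functions C^oo(M),
     V  = the A-module of vector fields,
     act X f = X(f)  (vector fields acting as derivations),
     br  = Lie bracket of vector fields,
     1-forms = A-linear maps V -> A (predicate is_form). *)
From HB Require Import structures.
From mathcomp Require Import all_boot all_order all_algebra.
From mathcomp Require Import reals.
Set Implicit Arguments. Unset Strict Implicit. Unset Printing Implicit Defensive.
Import Order.TTheory GRing.Theory Num.Theory.
Local Open Scope ring_scope.

Section Defs.
Variables (R : realType) (A : comAlgType R) (V : lmodType A).

Record lie_rinehart (act : V -> A -> A) (br : V -> V -> V) : Prop := {
  act_addl : forall X Y f, act (X + Y) f = act X f + act Y f;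
  act_scalel : forall g X f, act (g *: X) f = g * act X f;
  act_addr : forall X f g, act X (f + g) = act X f + act X g;
  act_scaleR : forall X (r : R) f, act X (r%:A * f) = r%:A * act X f;
  act_mul : forall X f g, act X (f * g) = act X f * g + f * act X g;
  br_addl : forall X Y Z, br (X + Y) Z = br X Z + br Y Z;
  br_anti : forall X Y, br X Y = - br Y X;
  br_leibniz : forall X Y f, br X (f *: Y) = f *: br X Y + act X f *: Y;
  br_jacobi : forall X Y Z,
      br X (br Y Z) + br Y (br Z X) + br Z (br X Y) = 0;
  act_br : forall X Y f, act (br X Y) f = act X (act Y f) - act Y (act X f)
}.

Record affine_connection (act : V -> A -> A) (nabla : V -> V -> V) : Prop := {
  conn_addl : forall X Y Z, nabla (X + Y) Z = nabla X Z + nabla Y Z;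
  conn_scalel : forall f X Y, nabla (f *: X) Y = f *: nabla X Y;
  conn_addr : forall X Y Z, nabla X (Y + Z) = nabla X Y + nabla X Z;
  conn_leibniz : forall X f Y, nabla X (f *: Y) = f *: nabla X Y + act X f *: Y
}.

Definition is_form (eta : V -> A) : Prop :=
  forall f X Y, eta (f *: X + Y) = f * eta X + eta Y.

Definition sym_tensor (h : V -> V -> A) : Prop :=
  (forall X Y, h X Y = h Y X) /\ (forall X, is_form (h X)).

Definition flat (h : V -> V -> A) (Y : V) : V -> A := fun Z => h Y Z.

Definition tensor11 (J : V -> V) : Prop :=
  forall f X Y, J (f *: X + Y) = f *: J X + J Y.

Definition h_symmetric (h : V -> V -> A) (J : V -> V) : Prop :=
  forall X Y, h (J X) Y = h X (J Y).

Definition covd (act : V -> A -> A) (nabla : V -> V -> V) (X : V) (eta : V -> A)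
  : V -> A := fun Z => act X (eta Z) - eta (nabla X Z).

Definition torsion (nabla : V -> V -> V) (br : V -> V -> V) (X Y : V) : V :=
  nabla X Y - nabla Y X - br X Y.

(* (\nabla_X h)(Y) as a 1-form *)
Definition covd_h (act : V -> A -> A) (nabla : V -> V -> V) (h : V -> V -> A)
  (X Y : V) : V -> A :=
  fun Z => act X (h Y Z) - h (nabla X Y) Z - h Y (nabla X Z).

Definition Jstar (J : V -> V) (eta : V -> A) : V -> A := fun X => eta (J X).

(* (\nabla_X J^* ) beta *)
Definition covd_Jstar (act : V -> A -> A) (nabla : V -> V -> V) (J : V -> V)
  (X : V) (beta : V -> A) : V -> A :=
  fun Z => covd act nabla X (Jstar J beta) Z - Jstar J (covd act nabla X beta) Z.

(* sections of TM (+) T^*M *)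
Definition sec := (V * (V -> A))%type.
Definition sadd (s t : sec) : sec := (s.1 + t.1, fun Z => s.2 Z + t.2 Z).
Definition sopp (s : sec) : sec := (- s.1, fun Z => - s.2 Z).
Definition szero : sec := (0, fun _ => 0).

Definition Jhat (J : V -> V) (hinv : (V -> A) -> V) (s : sec) : sec :=
  (- s.1 + (J (hinv s.2)) *+ 2, s.2).

Definition nbracket (act : V -> A -> A) (br : V -> V -> V) (nabla : V -> V -> V)
  (s t : sec) : sec :=
  (br s.1 t.1, fun Z => covd act nabla s.1 t.2 Z - covd act nabla t.1 s.2 Z).

Definition nijenhuis act br nabla J hinv (s t : sec) : sec :=
  let Jh := Jhat J hinv in
  let b := nbracket act br nabla in
  sadd (sadd (b (Jh s) (Jh t)) (sopp (Jh (b (Jh s) t))))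
       (sadd (sopp (Jh (b s (Jh t)))) (Jh (Jh (b s t)))).

Definition nabla_integrable act br nabla J hinv : Prop :=
  forall s t : sec, is_form s.2 -> is_form t.2 ->
    nijenhuis act br nabla J hinv s t = szero.

End Defs.

(* Main.v *)
Require Import Defs.
From HB Require Import structures.
From mathcomp Require Import all_boot all_order all_algebra.
From mathcomp Require Import reals.
From mathcomp Require Import ring.
From Stdlib Require Import FunctionalExtensionality.
Import Order.TTheory GRing.Theory Num.Theory.
Local Open Scope ring_scope.
Set Implicit Arguments. Unset Strict Implicit. Unset Printing Implicit Defensive.

Section S.
Variables (R : realType) (A : comAlgType R) (V : lmodType A)
  (act : V -> A -> A) (br : V -> V -> V) (nabla : V -> V -> V)
  (h : V -> V -> A) (hinv : (V -> A) -> V) (J : V -> V).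
Hypotheses (HLR : lie_rinehart act br) (HC : affine_connection act nabla)
  (Hh : sym_tensor h) (Hi1 : forall Y, hinv (flat h Y) = Y)
  (Hi2 : forall eta, is_form eta -> flat h (hinv eta) = eta)
  (HJ : tensor11 J) (HJs : h_symmetric h J).

Lemma test (a b c : A) : a * (b + c) - c * a = a * b.
Proof. ring. Qed.

Lemma form0 (eta : V -> A) : is_form eta -> eta 0 = 0.
Proof. move=> H. have := H 1 0 0. rewrite scaler0 addr0 mul1r => E.
have := congr1 (fun x => x - eta 0) E. by rewrite subrr addrK. Qed.

Lemma formD (eta : V -> A) X Y : is_form eta -> eta (X + Y) = eta X + eta Y.
Proof. by move=> H; rewrite -{1}[X]scale1r H mul1r. Qed.

Lemma formZ (eta : V -> A) f X : is_form eta -> eta (f *: X) = f * eta X.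
Proof. by move=> H; rewrite -[f *: X]addr0 H form0 // addr0. Qed.

Lemma formN (eta : V -> A) X : is_form eta -> eta (- X) = - eta X.
Proof. by move=> H; rewrite -scaleN1r formZ // mulN1r. Qed.

Lemma hlD X Y Z : h (X + Y) Z = h X Z + h Y Z.
Proof. case: Hh => Hs Hf. by rewrite Hs formD // Hs [h Z Y]Hs. Qed.
Lemma hlZ f X Z : h (f *: X) Z = f * h X Z.
Proof. case: Hh => Hs Hf. by rewrite Hs formZ // Hs. Qed.
Lemma hlN X Z : h (- X) Z = - h X Z.
Proof. by rewrite -scaleN1r hlZ mulN1r. Qed.
Lemma hrD X Y Z : h Z (X + Y) = h Z X + h Z Y.
Proof. case: Hh => Hs Hf. by rewrite formD. Qed.

Lemma flatD X Y : flat h (X + Y) = (fun Z => flat h X Z + flat h Y Z).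
Proof. apply: functional_extensionality => Z. by rewrite /flat hlD. Qed.

Lemma flat_inj X Y : (forall Z, h X Z = h Y Z) -> X = Y.
Proof.
move=> H. rewrite -(Hi1 X) -(Hi1 Y). congr hinv.
by apply: functional_extensionality => Z; rewrite /flat H.
Qed.

Lemma form_flat X : is_form (flat h X).
Proof. by case: Hh => _ Hf; apply: Hf. Qed.

Lemma hinvD a b : is_form a -> is_form b ->
  hinv (fun Z => a Z + b Z) = hinv a + hinv b.
Proof.
move=> Ha Hb. rewrite -{1}(Hi2 Ha) -{1}(Hi2 Hb) -flatD. by rewrite Hi1.
Qed.

Lemma JD X Y : J (X + Y) = J X + J Y.
Proof. by rewrite -{1}[X]scale1r HJ scale1r. Qed.

Lemma formDf a b : is_form a -> is_form b -> is_form (fun Z : V => a Z + b Z).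
Proof. move=> Ha Hb f X Y. rewrite Ha Hb. ring. Qed.
Lemma formNf a : is_form a -> is_form (fun Z : V => - a Z).
Proof. move=> Ha f X Y. rewrite Ha. ring. Qed.
Lemma formBf a b : is_form a -> is_form b -> is_form (fun Z : V => a Z - b Z).
Proof. move=> Ha Hb f X Y. rewrite Ha Hb. ring. Qed.

Lemma covd_form X b : is_form b -> is_form (covd act nabla X b).
Proof.
move=> Hb f Y Z. rewrite /covd Hb (act_addr HLR) (act_mul HLR) (conn_addr HC)
  (conn_leibniz HC) !formD // !formZ //. ring.
Qed.

Lemma covd_addl X Y b Z : is_form b ->
  covd act nabla (X + Y) b Z = covd act nabla X b Z + covd act nabla Y b Z.
Proof. move=> Hb. rewrite /covd (act_addl HLR) (conn_addl HC) formD //. ring. Qed.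

Lemma covd_oppl X b Z : is_form b ->
  covd act nabla (- X) b Z = - covd act nabla X b Z.
Proof. move=> Hb. rewrite /covd -scaleN1r (act_scalel HLR) (conn_scalel HC) formZ //. ring. Qed.

Lemma br0l Y : br 0 Y = 0.
Proof. have := br_addl HLR 0 0 Y. rewrite addr0 => E.
have := congr1 (fun x => x - br 0 Y) E. by rewrite subrr addrK. Qed.
Lemma br_addr X Y Z : br X (Y + Z) = br X Y + br X Z.
Proof. by rewrite (br_anti HLR) (br_addl HLR) opprD -!(br_anti HLR). Qed.
Lemma br_oppl X Y : br (- X) Y = - br X Y.
Proof. apply/eqP; rewrite -subr_eq0 opprK -(br_addl HLR) addNr br0l //. Qed.
Lemma br_oppr X Y : br X (- Y) = - br X Y.
Proof. by rewrite (br_anti HLR) br_oppl -(br_anti HLR). Qed.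

Lemma zmodL (W : zmodType) (p q r s jb jc jd : W) :
  p + -(-q + jb) + (-(-r + jc) + (-(-s + jd) + jd)) = (p + q) + (r + s) - (jb + jc).
Proof.
rewrite !opprD !opprK subrK !addrA.
rewrite [_ - jc + s]addrAC [p + q - jb + r]addrAC [_ - jb + s]addrAC. done.
Qed.

Definition P eta := J (hinv eta).

Lemma N2 s t : (nijenhuis act br nabla J hinv s t).2 = (fun _ => 0).
Proof.
apply: functional_extensionality => Z. case: s t => X e [Y b].
rewrite /nijenhuis /sadd /sopp /Jhat /nbracket /=.
ring.
Qed.

Lemma N1 X Y e b : is_form e -> is_form b ->
  (nijenhuis act br nabla J hinv (X, e) (Y, b)).1 =
  (br (P e) (P b) - P (fun Z => covd act nabla (P e) b Z - covd act nabla (P b) e Z)) *+ 4.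
Proof.
move=> He Hb.
rewrite /nijenhuis /sadd /sopp /Jhat /nbracket /=.
rewrite -/(P e) -/(P b) zmodL.
have Fb : forall X Y, is_form (fun Z : V => covd act nabla X b Z - covd act nabla Y e Z).
  by move=> *; apply: formBf; apply: covd_form.
have Hi : forall X Y, J (hinv (fun Z : V => covd act nabla (- X + P e *+ 2) b Z - covd act nabla Y e Z))
   + J (hinv (fun Z : V => covd act nabla X b Z - covd act nabla (- Y + P b *+ 2) e Z))
   = P (fun Z : V => covd act nabla (P e) b Z - covd act nabla (P b) e Z) *+ 2.
  move=> X0 Y0. rewrite -JD -hinvD //.
  have -> : (fun Z => (covd act nabla (- X0 + P e *+ 2) b Z - covd act nabla Y0 e Z) + 
     (covd act nabla X0 b Z - covd act nabla (- Y0 + P b *+ 2) e Z)) =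
     (fun Z => (covd act nabla (P e) b Z - covd act nabla (P b) e Z) + 
      (covd act nabla (P e) b Z - covd act nabla (P b) e Z)).
    apply: functional_extensionality => Z.
    rewrite !covd_addl // !covd_oppl //. ring.
  have E := hinvD (Fb (P e) (P b)) (Fb (P e) (P b)). simpl in E.
  by rewrite E JD /P mulr2n.
rewrite -!mulrnDl Hi -mulrnA -!br_addr -(br_addl HLR).
rewrite [-Y + _ + _]addrC addNKr [-X + _ + _]addrC addNKr.
rewrite mulrnBl; congr (_ - _).
rewrite !mulr2n (br_addl HLR) !br_addr.
by rewrite !mulrS mulr0n addr0 !addrA.
Qed.


Lemma four_reg (v : V) : v *+ 4 = 0 -> v = 0.
Proof.
move=> H. have : (4^-1 : R)%:A *: (v *+ 4) = v.
  rewrite -scaler_nat scalerA mulr_algl.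
  have -> : (4^-1 : R) *: (4%:R : A) = 1.
    by rewrite -[(4%:R : A)]scaler_nat scalerA mulVf ?pnatr_eq0 // scale1r.
  by rewrite scale1r.
by rewrite H scaler0 => <-.
Qed.

Definition zeta X0 Y0 := fun Z : V => covd act nabla (J X0) (flat h Y0) Z - covd act nabla (J Y0) (flat h X0) Z.

Lemma zeta_form X0 Y0 : is_form (zeta X0 Y0).
Proof. by apply: formBf; apply: covd_form; apply: form_flat. Qed.

Lemma hP X0 Y0 Z : h (P (zeta X0 Y0)) Z = zeta X0 Y0 (J Z).
Proof.
rewrite /P HJs. exact: (congr1 (fun f => f (J Z)) (Hi2 (zeta_form X0 Y0))).
Qed.

Lemma Dexp X0 Y0 Z :
  (covd_h act nabla h (J X0) (J Y0) Z - covd_h act nabla h (J Y0) (J X0) Z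
               + h (torsion nabla br (J X0) (J Y0)) Z)
  - (covd_Jstar act nabla J (J X0) (flat h Y0) Z
                 - covd_Jstar act nabla J (J Y0) (flat h X0) Z)
  = zeta X0 Y0 (J Z) - h (br (J X0) (J Y0)) Z.
Proof.
rewrite /zeta /covd_h /torsion /covd_Jstar /covd /Jstar /flat !hlD !hlN.
rewrite -!HJs. ring.
Qed.

Lemma main_equiv : nabla_integrable act br nabla J hinv <->
  (forall X Y : V,
     (fun Z => covd_h act nabla h (J X) (J Y) Z - covd_h act nabla h (J Y) (J X) Z
               + h (torsion nabla br (J X) (J Y)) Z)
     = (fun Z => covd_Jstar act nabla J (J X) (flat h Y) Z
                 - covd_Jstar act nabla J (J Y) (flat h X) Z)).
Proof.
have KeyEq : forall X0 Y0,
  (fun Z => covd_h act nabla h (J X0) (J Y0) Z - covd_h act nabla h (J Y0) (J X0) Z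
               + h (torsion nabla br (J X0) (J Y0)) Z)
     = (fun Z => covd_Jstar act nabla J (J X0) (flat h Y0) Z
                 - covd_Jstar act nabla J (J Y0) (flat h X0) Z)
  <-> br (J X0) (J Y0) = P (zeta X0 Y0).
  move=> X0 Y0; split.
  - move=> E. apply: flat_inj => Z. rewrite hP.
    have EZ := congr1 (fun f => f Z) E. simpl in EZ.
    have := Dexp X0 Y0 Z. rewrite EZ subrr => /eqP. rewrite eq_sym subr_eq0 => /eqP.
    by move=> ->.
  - move=> E. apply: functional_extensionality => Z.
    by apply/eqP; rewrite -subr_eq0 Dexp E hP subrr.
split.
- move=> HI X0 Y0. apply/KeyEq.
  have := HI (0, flat h X0) (0, flat h Y0) (form_flat _) (form_flat _).
  move/(congr1 fst). rewrite N1; try exact: form_flat. rewrite /szero /= => /four_reg/eqP.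
  rewrite subr_eq0 => /eqP E.
  rewrite /P !Hi1 in E. by rewrite /zeta /P.
- move=> C [X e] [Y b] /= He Hb.
  have E := proj1 (KeyEq (hinv e) (hinv b)) (C _ _).
  rewrite /zeta !Hi2 // in E.
  rewrite [LHS]surjective_pairing N2 N1 // /P.
  rewrite /P in E. by rewrite E subrr mul0rn.
Qed.
End S.

Theorem proposition3p6 (R : realType) (A : comAlgType R) (V : lmodType A)
  (act : V -> A -> A) (br : V -> V -> V) (nabla : V -> V -> V)
  (h : V -> V -> A) (hinv : (V -> A) -> V) (J : V -> V) :
  lie_rinehart act br ->
  affine_connection act nabla ->
  sym_tensor h ->
  (* non-degeneracy of h: flat h : V -> {1-forms} is bijective with inverse hinv *)
  (forall Y, hinv (flat h Y) = Y) ->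
  (forall eta, is_form eta -> flat h (hinv eta) = eta) ->
  tensor11 J ->
  h_symmetric h J ->
  nabla_integrable act br nabla J hinv <->
  (forall X Y : V,
     (fun Z => covd_h act nabla h (J X) (J Y) Z - covd_h act nabla h (J Y) (J X) Z
               + h (torsion nabla br (J X) (J Y)) Z)
     = (fun Z => covd_Jstar act nabla J (J X) (flat h Y) Z
                 - covd_Jstar act nabla J (J Y) (flat h X) Z)).
Proof.
move=> HLR HC Hh Hi1 Hi2 HJ HJs. exact: main_equiv.
Qed.
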